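(* Let $n,K\ge1$, $\varepsilon>0$, $\Delta^{\inf}\in\mathbb{R}$, $c\ge0$ (playing the role of $f(x^0)-f^{\inf}$), ${\bf L}\in\mathbb{S}^d_{++}$, ${\bf L}_1,\dots,{\bf L}_n\in\mathbb{S}^d_{++}$, and let ${\bf S}_1,\dots,{\bf S}_n$ be random matrices in $\mathbb{S}^d_+$ with $\mathbb{E}[{\bf S}_i]={\bf I}_d$ and finite second moments. For ${\bf D}\in\mathbb{S}^d_{++}$ let $\lambda_{{\bf D}}:=\max_i\lambda_{\max}\big(\mathbb{E}[{\bf L}_i^{1/2}({\bf S}_i-{\bf I}_d){\bf D}{\bf L}{\bf D}({\bf S}_i-{\bf I}_d){\bf L}_i^{1/2}]\big)$. Then the set of ${\bf D}\in\mathbb{S}^d_{++}$ satisfying $${\bf D}{\bf L}{\bf D}\preceq{\bf D},\qquad\lambda_{{\bf D}}\le\frac nK,\qquad 4\Delta^{\inf}\lambda_{{\bf D}}\le n\varepsilon^2\det({\bf D})^{1/d},\qquad K\ge\frac{12c}{\det({\bf D})^{1/d}\varepsilon^2}$$ is convex.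
   Context: $\mathbb{S}^d_{+}$/$\mathbb{S}^d_{++}$: symmetric positive semidefinite/definite $d\times d$ matrices; $\preceq$ is the Loewner order; $\lambda_{\max}$ is the largest eigenvalue. *)

(* Defs.v *)
From HB Require Import structures.
From mathcomp Require Import all_boot all_order all_algebra.
From mathcomp Require Import all_classical all_reals all_analysis.
Set Implicit Arguments. Unset Strict Implicit. Unset Printing Implicit Defensive.
Import Order.TTheory GRing.Theory Num.Theory.
Local Open Scope ring_scope.
Local Open Scope classical_set_scope.

Section MatrixDefs.
Variable R : realType.

Definition symmx d (A : 'M[R]_d) : Prop := A^T = A.

Definition psdmx d (A : 'M[R]_d) : Prop :=
  symmx A /\ forall x : 'cV[R]_d, 0 <= (x^T *m A *m x) 0 0.

Definition pdmx d (A : 'M[R]_d) : Prop :=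
  symmx A /\ forall x : 'cV[R]_d, x != 0 -> 0 < (x^T *m A *m x) 0 0.

Definition loewner_le d (A B : 'M[R]_d) : Prop := psdmx (B - A).

(* the PSD square root A^{1/2} (unique PSD B with B*B = A when A is PSD) *)
Definition sqrtmx d (A : 'M[R]_d) : 'M[R]_d :=
  match pselect (exists B : 'M[R]_d, psdmx B /\ B *m B = A) with
  | left e => projT1 (cid e)
  | right _ => 0
  end.

Definition lambda_max d (A : 'M[R]_d) : R :=
  sup [set a : R | eigenvalue A a].

Definition mexpect dT (T : measurableType dT) (P : probability T R) d
  (X : T -> 'M[R]_d) : 'M[R]_d :=
  \matrix_(j, k) Rintegral P setT (fun w => X w j k).

Definition lambdaD dT (T : measurableType dT) (P : probability T R) d n
  (L : 'M[R]_d) (Ls : 'I_n -> 'M[R]_d) (S : 'I_n -> T -> 'M[R]_d)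
  (D : 'M[R]_d) : R :=
  sup [set lambda_max (mexpect P (fun w =>
          sqrtmx (Ls i) *m (S i w - 1%:M) *m D *m L *m D *m (S i w - 1%:M)
            *m sqrtmx (Ls i))) | i in [set: 'I_n]].

Definition feasible dT (T : measurableType dT) (P : probability T R) d n (K : nat)
  (eps Dinf c : R) (L : 'M[R]_d) (Ls : 'I_n -> 'M[R]_d)
  (S : 'I_n -> T -> 'M[R]_d) (D : 'M[R]_d) : Prop :=
  [/\ pdmx D,
      loewner_le (D *m L *m D) D,
      lambdaD P L Ls S D <= n%:R / K%:R,
      4 * Dinf * lambdaD P L Ls S D <= n%:R * eps ^+ 2 * powR (\det D) d%:R^-1
    & 12 * c / (powR (\det D) d%:R^-1 * eps ^+ 2) <= K%:R].

Definition convex_mxset d (A : 'M[R]_d -> Prop) : Prop :=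
  forall D1 D2 (t : R), A D1 -> A D2 -> 0 <= t <= 1 ->
    A (t *: D1 + (1 - t) *: D2).

End MatrixDefs.

(* Main.v *)
Require Import Defs.
From HB Require Import structures.
From mathcomp Require Import all_boot all_order all_algebra.
From mathcomp Require Import all_classical all_reals all_analysis.
From mathcomp Require Import complex.
From mathcomp Require Import ring lra.
Set Implicit Arguments. Unset Strict Implicit. Unset Printing Implicit Defensive.
Import Order.TTheory GRing.Theory Num.Theory.
Local Open Scope ring_scope.
Local Open Scope classical_set_scope.
Local Notation ct M := (map_mx Num.conj (trmx M)).

Lemma mxE_add (K : pzRingType) (A B : 'M[K]_1) : (A + B) 0 0 = A 0 0 + B 0 0.
Proof. by rewrite mxE. Qed.
Lemma mxE_opp (K : pzRingType) (A : 'M[K]_1) : (- A) 0 0 = - A 0 0.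
Proof. by rewrite mxE. Qed.
Lemma mxE_scale (K : pzRingType) a (A : 'M[K]_1) : (a *: A) 0 0 = a * A 0 0.
Proof. by rewrite mxE. Qed.

Section Spec.
Variable R : realType.
Local Notation C := (R[i]).
Local Notation toC := (real_complex R).

Definition mapC m n (A : 'M[R]_(m,n)) : 'M[C]_(m,n) := map_mx toC A.

Lemma toC_real (x : R) : toC x \is Num.real.
Proof. by rewrite complex_real. Qed.

Lemma conj_toC (x : R) : (toC x)^* = toC x.
Proof. exact/CrealP/toC_real. Qed.

Lemma real_toC (z : C) : z \is Num.real -> z = toC (complex.Re z).
Proof. by case: z => a b; rewrite complex_real => /eqP ->. Qed.

Lemma mapC_tC m n (A : 'M[R]_(m,n)) : ct (mapC A) = mapC (trmx A).
Proof. by apply/matrixP => i j; rewrite !mxE conj_toC. Qed.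

Lemma mapCM m n p (A : 'M[R]_(m,n)) (B : 'M[R]_(n,p)) : mapC (A *m B) = mapC A *m mapC B.
Proof. exact: map_mxM. Qed.

Lemma ctK m n (M : 'M[C]_(m,n)) : ct (ct M) = M.
Proof. by apply/matrixP => i j; rewrite !mxE conjCK. Qed.

Lemma herm_spectral d (M : 'M[C]_d) : ct M = M ->
  exists P : 'M[C]_d, exists r : 'rV[R]_d,
   [/\ P *m ct P = 1%:M, ct P *m P = 1%:M & M = ct P *m diag_mx (mapC r) *m P].
Proof.
move=> Mh.
have Aher : M \is hermsymmx.
  by apply/is_hermitianmxP; rewrite expr0 scale1r.
have /orthomx_spectralP AE := hermitian_normalmx Aher.
have Pu := spectral_unitarymx M.
have Pinv := invmx_unitary Pu.
have Pr := hermitian_spectral_diag_real Aher.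
exists (spectralmx M), (map_mx (@complex.Re R) (spectral_diag M)).
have -> : mapC (map_mx (@complex.Re R) (spectral_diag M)) = spectral_diag M.
  apply/matrixP => i j; rewrite !mxE; symmetry; apply: real_toC.
  exact: (mxOverP Pr).
split.
- exact/unitarymxP.
- by rewrite -Pinv mulVmx // unitarymx_unit.
- by rewrite -Pinv.
Qed.

Lemma sym_spectral d (A : 'M[R]_d) : A^T = A ->
  exists P : 'M[C]_d, exists r : 'rV[R]_d,
   [/\ P *m ct P = 1%:M, ct P *m P = 1%:M & mapC A = ct P *m diag_mx (mapC r) *m P].
Proof. by move=> As; apply: herm_spectral; rewrite mapC_tC As. Qed.

Definition qf d (A : 'M[R]_d) (x : 'cV[R]_d) : R := (trmx x *m A *m x) 0 0.
Definition nrm2 d (x : 'cV[R]_d) : R := (trmx x *m x) 0 0.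

Lemma ct_mul m n p (A : 'M[C]_(m,n)) (B : 'M[C]_(n,p)) : ct (A *m B) = ct B *m ct A.
Proof. by rewrite trmx_mul map_mxM. Qed.

Lemma diag_form d (y : 'cV[C]_d) (s : 'rV[C]_d) :
  (ct y *m diag_mx s *m y) 0 0 = \sum_j s 0 j * ((y j 0)^* * y j 0).
Proof.
rewrite mxE; apply: eq_bigr => j _.
rewrite mul_mx_diag !mxE; ring.
Qed.

Lemma spec_qf d (A : 'M[R]_d) (P : 'M[C]_d) (r : 'rV[R]_d) (x : 'cV[R]_d) :
  P *m ct P = 1%:M -> ct P *m P = 1%:M -> mapC A = ct P *m diag_mx (mapC r) *m P ->
  toC (qf A x) = \sum_j toC (r 0 j) * (((P *m mapC x) j 0)^* * (P *m mapC x) j 0)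
  /\ toC (nrm2 x) = \sum_j (((P *m mapC x) j 0)^* * (P *m mapC x) j 0).
Proof.
move=> PP1 PP2 AE; split.
  have -> : toC (qf A x) = (mapC (trmx x *m A *m x)) 0 0 by rewrite mxE.
  transitivity ((ct (P *m mapC x) *m diag_mx (mapC r) *m (P *m mapC x)) 0 0).
    by rewrite !mapCM AE -mapC_tC ct_mul !mulmxA.
  by rewrite diag_form; apply: eq_bigr => j _; rewrite mxE.
have -> : toC (nrm2 x) = (mapC (trmx x *m x)) 0 0 by rewrite mxE.
rewrite mapCM -mapC_tC.
have -> : ct (mapC x) *m mapC x = ct (P *m mapC x) *m (P *m mapC x).
  by rewrite ct_mul mulmxA -(mulmxA _ (ct P)) PP2 mulmx1.
rewrite mxE; apply: eq_bigr => j _; rewrite !mxE; ring.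
Qed.


Lemma nrm2E d (x : 'cV[R]_d) : nrm2 x = \sum_j x j 0 ^+ 2.
Proof. by rewrite /nrm2 mxE; apply: eq_bigr => j _; rewrite mxE expr2. Qed.

Lemma nrm2_ge0 d (x : 'cV[R]_d) : 0 <= nrm2 x.
Proof. by rewrite nrm2E sumr_ge0 // => j _; rewrite sqr_ge0. Qed.

Lemma nrm2_gt0 d (x : 'cV[R]_d) : x != 0 -> 0 < nrm2 x.
Proof.
move=> xn0; rewrite lt_def nrm2_ge0 andbT; apply/negP => /eqP.
rewrite nrm2E => /psumr_eq0P H.
move/negP: xn0; apply; apply/eqP/matrixP => i j.
rewrite (ord1 j) mxE; apply/eqP; rewrite -sqrf_eq0; apply/eqP/H => //.
by move=> k _; rewrite sqr_ge0.
Qed.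

Lemma qf_le_ub d (A : 'M[R]_d) (P : 'M[C]_d) (r : 'rV[R]_d) (x : 'cV[R]_d) (b : R) :
  P *m ct P = 1%:M -> ct P *m P = 1%:M -> mapC A = ct P *m diag_mx (mapC r) *m P ->
  (forall j, r 0 j <= b) -> qf A x <= b * nrm2 x.
Proof.
move=> PP1 PP2 AE rb; have [E1 E2] := spec_qf x PP1 PP2 AE.
rewrite -lecR -/toC rmorphM /= E1 E2 mulr_sumr; apply: ler_sum => j _.
apply: ler_wpM2r; first by rewrite mulrC mul_conjC_ge0.
by rewrite lecR.
Qed.

Lemma delta_diag d (s : 'rV[C]_d) (j : 'I_d) :
  (delta_mx 0 j : 'rV[C]_d) *m diag_mx s = s 0 j *: delta_mx 0 j.
Proof.
apply/matrixP => i k; rewrite mul_mx_diag !mxE.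
rewrite (ord1 i) eqxx /=; case: eqP => [->|_]; by rewrite ?mulr1 ?mul1r ?mulr0 ?mul0r.
Qed.

Lemma spec_eig d (A : 'M[R]_d) (P : 'M[C]_d) (r : 'rV[R]_d) (j : 'I_d) :
  P *m ct P = 1%:M -> ct P *m P = 1%:M -> mapC A = ct P *m diag_mx (mapC r) *m P ->
  eigenvalue A (r 0 j).
Proof.
move=> PP1 PP2 AE; rewrite -(eigenvalue_map toC); apply/eigenvalueP.
exists ((delta_mx 0 j : 'rV[C]_d) *m P).
  have -> : map_mx toC A = mapC A by [].
  rewrite AE !mulmxA -(mulmxA _ P) PP1 mulmx1 delta_diag.
  by rewrite -scalemxAl mxE.
apply/negP => /eqP H.
have : (delta_mx 0 j : 'rV[C]_d) *m P *m ct P = 0 by rewrite H mul0mx.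
rewrite -mulmxA PP1 mulmx1 => /matrixP /(_ 0 j); rewrite !mxE !eqxx /=.
by move/eqP; rewrite oner_eq0.
Qed.

Lemma eig_ub d (A : 'M[R]_d) a b : eigenvalue A a ->
  (forall x, qf A x <= b * nrm2 x) -> a <= b.
Proof.
move=> /eigenvalueP [v vA vn0] H.
have := H (trmx v).
have -> : qf A (trmx v) = a * nrm2 (trmx v).
  by rewrite /qf /nrm2 !trmxK vA -scalemxAl mxE.
rewrite ler_pM2r // nrm2_gt0 //.
by apply: contra vn0 => /eqP H0; rewrite -(trmxK v) H0 trmx0.
Qed.

Lemma lam_props d (A : 'M[R]_d) : (0 < d)%N -> trmx A = A ->
  (forall x, qf A x <= lambda_max A * nrm2 x) /\
  (forall b, (forall x, qf A x <= b * nrm2 x) -> lambda_max A <= b).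
Proof.
move=> d0 As; have [P [r [PP1 PP2 AE]]] := sym_spectral As.
set E := [set a | eigenvalue A a].
have Er j : E (r 0 j) by exact: spec_eig PP1 PP2 AE.
have Eub : has_ubound E.
  exists (\sum_j `|r 0 j|) => a Ea; apply: (eig_ub Ea) => x.
  apply: qf_le_ub PP1 PP2 AE _ => j.
  apply: le_trans (real_ler_norm _) _; first exact: num_real.
  by rewrite (bigD1 j) //= lerDl sumr_ge0.
have E0 : E !=set0 by exists (r 0 (Ordinal d0)).
split.
  move=> x; apply: qf_le_ub PP1 PP2 AE _ => j.
  by rewrite /lambda_max; apply: (ub_le_sup Eub); exact: Er.
move=> b H; rewrite /lambda_max; apply: ge_sup => // a Ea; exact: eig_ub Ea H.
Qed.


Lemma conj_mapC m n (M : 'M[R]_(m,n)) : map_mx Num.conj (mapC M) = mapC M.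
Proof. by apply/matrixP => i j; rewrite !mxE conj_toC. Qed.

Lemma trmx_mapC m n (N : 'M[R]_(m,n)) : trmx (mapC N) = mapC (trmx N).
Proof. by apply/matrixP => i j; rewrite !mxE. Qed.

Lemma ct1 d : ct (1%:M : 'M[C]_d) = 1%:M.
Proof. by rewrite trmx1 map_mx1. Qed.

Lemma cpsd d (B : 'M[R]_d) (z : 'rV[C]_d) : trmx B = B -> (forall x, 0 <= qf B x) ->
  0 <= (z *m mapC B *m ct z) 0 0.
Proof.
move=> Bs Bp.
set x := map_mx (@complex.Re R) z; set y := map_mx (@complex.Im R) z.
have zE : z = mapC x + 'i *: mapC y.
  by apply/matrixP => i j; rewrite !mxE; exact: complexE.
have ctE : ct z = mapC (trmx x) - 'i *: mapC (trmx y).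
  apply/matrixP => i j; rewrite zE !mxE rmorphD rmorphM /= conjCi !conj_toC.
  by rewrite mulNr.
set X := mapC x; set Y := mapC y; set M := mapC B.
have fsym : (Y *m M *m mapC (trmx x)) 0 0 = (X *m M *m mapC (trmx y)) 0 0.
  have -> : X *m M *m mapC (trmx y) = trmx (Y *m M *m mapC (trmx x)).
    by rewrite !trmx_mul !trmx_mapC trmxK Bs mulmxA.
  by rewrite [in RHS]mxE.
have fX : (X *m M *m mapC (trmx x)) 0 0 = toC (qf B (trmx x)).
  by rewrite /qf trmxK -!mapCM mxE.
have fY : (Y *m M *m mapC (trmx y)) 0 0 = toC (qf B (trmx y)).
  by rewrite /qf trmxK -!mapCM mxE.
rewrite ctE zE -/X -/Y.
rewrite !mulmxBr !mulmxDl -!scalemxAl -!scalemxAr.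
rewrite !(mxE_add, mxE_opp, mxE_scale) fsym fX fY.
have ii : 'i * 'i = -1 :> C by rewrite -expr2 sqrCi.
set a := toC _; set b := toC _; set e := (X *m _ *m _) 0 0.
rewrite mulrA ii (_ : a + _ - _ = a + b); last by ring.
by rewrite -rmorphD ler0c addr_ge0.
Qed.

Lemma det_conj d (W X : 'M[C]_d) : \det (ct W *m X *m W) = \det X * \det (ct W *m W).
Proof. rewrite !det_mulmx; ring. Qed.

Lemma det_udiag d (Q : 'M[C]_d) (v : 'rV[C]_d) :
  ct Q *m Q = 1%:M -> \det (ct Q *m diag_mx v *m Q) = \prod_j v 0 j.
Proof. by move=> QQ; rewrite det_conj QQ det1 mulr1 det_diag. Qed.

Lemma eig_pos d (A : 'M[R]_d) a : eigenvalue A a ->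
  (forall x, x != 0 -> 0 < qf A x) -> 0 < a.
Proof.
move=> /eigenvalueP [v vA vn0] H.
have vt0 : trmx v != 0.
  by apply: contra vn0 => /eqP H0; rewrite -(trmxK v) H0 trmx0.
have := H _ vt0.
have -> : qf A (trmx v) = a * nrm2 (trmx v).
  by rewrite /qf /nrm2 !trmxK vA -scalemxAl mxE.
by rewrite pmulr_lgt0 // nrm2_gt0.
Qed.


Lemma ct_diag_mapC d (v : 'rV[R]_d) : ct (diag_mx (mapC v)) = diag_mx (mapC v).
Proof. by rewrite tr_diag_mx map_diag_mx conj_mapC. Qed.

Lemma diag_mapC_mul d (u v : 'rV[R]_d) :
  diag_mx (mapC u) *m diag_mx (mapC v) = diag_mx (mapC (\row_j (u 0 j * v 0 j))).
Proof.
rewrite mulmx_diag; congr diag_mx; apply/matrixP => i j; rewrite !mxE.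
by rewrite rmorphM.
Qed.

Lemma diag_mapC_one d (u : 'rV[R]_d) : (forall j, u 0 j = 1) -> diag_mx (mapC u) = 1%:M.
Proof.
move=> u1; apply/matrixP => i j; rewrite !mxE u1 rmorph1.
by case: eqP.
Qed.

Lemma mink_decomp d (A B : 'M[R]_d) : trmx A = A -> (forall x, x != 0 -> 0 < qf A x) ->
  trmx B = B -> (forall x, 0 <= qf B x) ->
  exists r c : 'rV[R]_d, [/\ (forall j, 0 < r 0 j), (forall j, 0 <= c 0 j),
     \det A = \prod_j r 0 j, \det B = \det A * \prod_j c 0 j &
     forall t s, \det (t *: A + s *: B) = \det A * \prod_j (t + s * c 0 j)].
Proof.
move=> As Ap Bs Bp.
have [P [r [PP1 PP2 AE]]] := sym_spectral As.
have rpos j : 0 < r 0 j := eig_pos (spec_eig j PP1 PP2 AE) Ap.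
pose sq := \row_j Num.sqrt (r 0 j) : 'rV[R]_d.
pose isq := \row_j (Num.sqrt (r 0 j))^-1 : 'rV[R]_d.
pose W := diag_mx (mapC sq) *m P.
pose Wi := ct P *m diag_mx (mapC isq).
have sq0 j : Num.sqrt (r 0 j) != 0 by rewrite gt_eqF // sqrtr_gt0.
have d1 : diag_mx (mapC sq) *m diag_mx (mapC isq) = 1%:M.
  by rewrite diag_mapC_mul diag_mapC_one // => j; rewrite !mxE mulfV.
have d2 : diag_mx (mapC isq) *m diag_mx (mapC sq) = 1%:M.
  by rewrite diag_mapC_mul diag_mapC_one // => j; rewrite !mxE mulVf.
have WiW : Wi *m W = 1%:M.
  by rewrite /Wi /W mulmxA -(mulmxA _ _ (diag_mx _)) d2 mulmx1 PP2.
have WW : ct W *m W = mapC A.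
  rewrite /W ct_mul ct_diag_mapC mulmxA -(mulmxA _ _ (diag_mx _)) diag_mapC_mul AE.
  congr (_ *m diag_mx _ *m _); apply/matrixP => i j; rewrite !mxE (ord1 i).
  by rewrite -expr2 sqr_sqrtr // ltW.
have cWcWi : ct W *m ct Wi = 1%:M by rewrite -ct_mul WiW ct1.
clearbody W Wi.
pose Cm := ct Wi *m mapC B *m Wi.
have Ch : ct Cm = Cm by rewrite /Cm !ct_mul ctK mapC_tC Bs mulmxA.
have [Q [c [QQ1 QQ2 CE]]] := herm_spectral Ch.
have BE : mapC B = ct W *m Cm *m W.
  by rewrite /Cm !mulmxA cWcWi mul1mx -mulmxA WiW mulmx1.
have cpos j : 0 <= c 0 j.
  pose e := (delta_mx 0 j : 'rV[C]_d).
  have E1 : (e *m Q *m Cm *m ct (e *m Q)) 0 0 = toC (c 0 j).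
    rewrite CE ct_mul !mulmxA -(mulmxA _ Q (ct Q)) QQ1 mulmx1.
    rewrite -(mulmxA _ Q (ct Q)) QQ1 mulmx1 delta_diag -scalemxAl mxE mxE.
    have -> : (e *m ct e) 0 0 = 1.
      by rewrite /e trmx_delta map_delta_mx ?rmorph1 // mul_delta_mx mxE !eqxx.
    by rewrite mulr1.
  have : 0 <= (e *m Q *m Cm *m ct (e *m Q)) 0 0.
    have := @cpsd d B (e *m Q *m ct Wi) Bs Bp.
    by rewrite (ct_mul (e *m Q) (ct Wi)) ctK /Cm !mulmxA.
  by rewrite E1 ler0c.
have dA : toC (\det A) = \prod_j toC (r 0 j).
  rewrite -det_map_mx -/(mapC A) AE det_udiag //.
  by apply: eq_bigr => j _; rewrite mxE.
have dC : \det Cm = \prod_j toC (c 0 j).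
  rewrite CE det_udiag //.
  by apply: eq_bigr => j _; rewrite mxE.
have dB : toC (\det B) = toC (\det A) * \prod_j toC (c 0 j).
  rewrite -!det_map_mx -/(mapC A) -/(mapC B) BE det_conj WW dC mulrC //.
have dT (t s : R) : toC (\det (t *: A + s *: B)) = toC (\det A) * \prod_j toC (t + s * c 0 j).
  rewrite -!det_map_mx -/(mapC A).
  have -> : map_mx toC (t *: A + s *: B) = ct W *m (ct Q *m diag_mx (mapC (\row_j (t + s * c 0 j))) *m Q) *m W.
    have -> : diag_mx (mapC (\row_j (t + s * c 0 j))) = toC t *: 1%:M + toC s *: diag_mx (mapC c).
      apply/matrixP => i j; rewrite !mxE rmorphD rmorphM /=.
      by case: eqP => _; rewrite ?mulr1n ?mulr0n; ring.
    rewrite mulmxDr mulmxDl -!scalemxAr -!scalemxAl mulmx1 QQ2 -CE.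
    rewrite mulmxDr mulmxDl -!scalemxAr -!scalemxAl mulmx1 WW -BE.
    by rewrite map_mxD !map_mxZ.
  rewrite det_conj WW mulrC det_udiag //.
  by congr (_ * _); apply: eq_bigr => j _; rewrite !mxE.
exists r, c; split => //.
- by apply: complexI; rewrite dA rmorph_prod.
- by apply: complexI; rewrite rmorphM rmorph_prod dB.
- by move=> t s; apply: complexI; rewrite rmorphM rmorph_prod dT.
Qed.


Lemma qf_lin d (A B : 'M[R]_d) a b x : qf (a *: A + b *: B) x = a * qf A x + b * qf B x.
Proof. by rewrite /qf mulmxDr mulmxDl -!scalemxAr -!scalemxAl !(mxE_add, mxE_scale). Qed.

Lemma qf_sub d (A B : 'M[R]_d) x : qf (A - B) x = qf A x - qf B x.
Proof. by rewrite /qf mulmxBr mulmxBl !(mxE_add, mxE_opp). Qed.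

Lemma qf_XLX d (X L : 'M[R]_d) y : trmx X = X -> qf (X *m L *m X) y = qf L (X *m y).
Proof. by move=> Xs; rewrite /qf trmx_mul Xs !mulmxA. Qed.

Definition bf d (L : 'M[R]_d) (u v : 'cV[R]_d) : R := (trmx u *m L *m v) 0 0.

Lemma qf_comb d (L : 'M[R]_d) (u v : 'cV[R]_d) a b : trmx L = L ->
  qf L (a *: u + b *: v) = a ^+ 2 * qf L u + 2 * a * b * bf L u v + b ^+ 2 * qf L v.
Proof.
move=> Ls.
have bs : bf L v u = bf L u v.
  rewrite /bf -[in RHS](trmxK (trmx u *m L *m v)) [in RHS]mxE.
  by rewrite !trmx_mul trmxK Ls mulmxA.
rewrite /qf [trmx (_ + _)]linearD /= [trmx (a *: _)]linearZ [trmx (b *: _)]linearZ /=.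
rewrite !mulmxDl !mulmxDr -!scalemxAl -!scalemxAr !(mxE_add, mxE_scale).
rewrite -/(qf L u) -/(qf L v) -/(bf L u v) -/(bf L v u) bs.
rewrite /qf; ring.
Qed.

Lemma conv_ineq d (L D1 D2 : 'M[R]_d) (t : R) (y : 'cV[R]_d) :
  trmx L = L -> (forall x, 0 <= qf L x) -> trmx D1 = D1 -> trmx D2 = D2 -> 0 <= t <= 1 ->
  qf ((t *: D1 + (1 - t) *: D2) *m L *m (t *: D1 + (1 - t) *: D2)) y <=
  t * qf (D1 *m L *m D1) y + (1 - t) * qf (D2 *m L *m D2) y.
Proof.
move=> Ls Lp D1s D2s /andP[t0 t1].
have Dts : trmx (t *: D1 + (1 - t) *: D2) = t *: D1 + (1 - t) *: D2.
  by rewrite linearD /= !linearZ /= D1s D2s.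
rewrite !qf_XLX // mulmxDl -!scalemxAl qf_comb //.
have := Lp (D1 *m y - D2 *m y).
rewrite (_ : D1 *m y - D2 *m y = 1 *: (D1 *m y) + (-1) *: (D2 *m y)); last first.
  by rewrite scale1r scaleN1r.
rewrite qf_comb //.
set qu := qf L _; set qv := qf L _; set b := bf L _ _.
move=> H.
have : 0 <= t * (1 - t) * (1 ^+ 2 * qu + 2 * 1 * -1 * b + (-1) ^+ 2 * qv).
  by rewrite mulr_ge0 // mulr_ge0 // subr_ge0.
nra.
Qed.

End Spec.

Section GM.
Variable R : realType.
Variable d : nat.
Hypothesis d0 : (0 < d)%N.

Definition GM (w : 'I_d -> R) := powR (\prod_j w j) (d%:R^-1).

Lemma dR_gt0 : 0 < (d%:R : R).
Proof. by rewrite ltr0n. Qed.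

Lemma powR_root (a : R) : 0 <= a -> powR (a ^+ d) (d%:R^-1) = a.
Proof.
move=> a0; rewrite -powR_mulrn // -powRrM mulfV ?powRr1 //.
by rewrite gt_eqF // dR_gt0.
Qed.

Lemma AMGM (x : 'I_d -> R) : (forall j, 0 <= x j) -> GM x <= (\sum_j x j) / d%:R.
Proof.
move=> x0.
have := @leif_AGM R 'I_d [pred _ | true] x.
rewrite card_ord /=.
move=> /(_ (fun j _ => x0 j)) /leifP H.
have mu0 : 0 <= (\sum_j x j) / d%:R.
  by rewrite divr_ge0 ?ler0n // sumr_ge0.
rewrite /GM -[X in _ <= X](powR_root mu0).
apply: ge0_ler_powR; rewrite ?invr_ge0 ?ler0n // ?nnegrE.
- by rewrite prodr_ge0.
- by rewrite exprn_ge0.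
- move: H; case: ifP => _; [move/eqP => <-|]; rewrite (eq_bigl xpredT) //.
  exact: ltW.
Qed.

Lemma GM_mul (u w : 'I_d -> R) : (forall j, 0 <= u j) -> (forall j, 0 <= w j) ->
  GM (fun j => u j * w j) = GM u * GM w.
Proof.
by move=> u0 w0; rewrite /GM big_split /= powRM // prodr_ge0.
Qed.

Lemma GM_super (u v : 'I_d -> R) : (forall j, 0 <= u j) -> (forall j, 0 <= v j) ->
  (forall j, 0 < u j + v j) -> GM u + GM v <= GM (fun j => u j + v j).
Proof.
move=> u0 v0 w0.
set w := fun j => u j + v j.
have wi0 j : 0 <= (w j)^-1 by rewrite invr_ge0; apply/ltW/w0.
have Eu : GM u = GM (fun j => u j / w j) * GM w.
  rewrite -GM_mul //; last by move=> j; apply/ltW/w0.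
    congr GM; apply: funext => j; by rewrite divfK // (gt_eqF (w0 j)).
  by move=> j; rewrite mulr_ge0.
have Ev : GM v = GM (fun j => v j / w j) * GM w.
  rewrite -GM_mul //; last by move=> j; apply/ltW/w0.
    congr GM; apply: funext => j; by rewrite divfK // (gt_eqF (w0 j)).
  by move=> j; rewrite mulr_ge0.
rewrite Eu Ev -mulrDl ler_piMl ?powR_ge0 //.
apply: le_trans (lerD (AMGM _) (AMGM _)) _.
- by move=> j; rewrite mulr_ge0.
- by move=> j; rewrite mulr_ge0.
rewrite -mulrDl -big_split /=.
rewrite (eq_bigr (fun _ => 1)); last first.
  by move=> j _; rewrite -mulrDl mulfV //; exact: lt0r_neq0.
by rewrite sumr_const card_ord mulfV // gt_eqF // dR_gt0.
Qed.

Lemma GM_cst (t : R) : 0 <= t -> GM (fun _ => t) = t.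
Proof. by move=> t0; rewrite /GM prodr_const card_ord powR_root. Qed.

Lemma mink_real (al t s : R) (c : 'I_d -> R) : 0 < al -> 0 < t -> 0 <= s ->
  (forall j, 0 <= c j) ->
  t * powR al (d%:R^-1) + s * powR (al * \prod_j c j) (d%:R^-1)
  <= powR (al * \prod_j (t + s * c j)) (d%:R^-1).
Proof.
move=> al0 t0 s0 c0.
have cp : 0 <= \prod_j c j by apply: prodr_ge0.
have tp : 0 <= \prod_j (t + s * c j).
  by apply: prodr_ge0 => j _; rewrite addr_ge0 ?mulr_ge0 // ltW.
have al1 := ltW al0; rewrite !powRM //.
rewrite mulrC (mulrC s) -mulrA -mulrDr; apply: ler_wpM2l; first exact: powR_ge0.
have H1 : forall j : 'I_d, 0 <= (fun _ => t) j by move=> j; apply: ltW.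
have H2 : forall j, 0 <= (fun j => s * c j) j by move=> j; apply: mulr_ge0.
have H3 : forall j : 'I_d, 0 < (fun _ => t) j + (fun j => s * c j) j.
  by move=> j; apply: ltr_wpDr => //; apply: mulr_ge0.
have := GM_super H1 H2 H3.
rewrite GM_cst ?(ltW t0) // GM_mul // GM_cst // (mulrC (GM c)).
by [].
Qed.

End GM.

Section Meas.
Variable R : realType.
Variable dT : measure_display.
Variable T : measurableType dT.
Variable P : probability T R.

Local Notation Int f := (P.-integrable setT (EFin \o f)).
Local Notation E f := (Rintegral P setT f).

Definition L2 (f : T -> R) := measurable_fun setT f /\ Int (fun w => f w ^+ 2).

Lemma Int_cst (k : R) : Int (fun _ => k).
Proof. exact: finite_measure_integrable_cst. Qed.

Lemma IntD (f g : T -> R) : Int f -> Int g -> Int (fun w => f w + g w).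
Proof.
move=> Hf Hg.
suff -> : EFin \o (fun w => f w + g w) = (fun w => (f w)%:E + (g w)%:E)%E.
  exact: (integrableD measurableT Hf Hg).
by apply: funext => w /=; rewrite EFinD.
Qed.

Lemma IntZ (k : R) (f : T -> R) : Int f -> Int (fun w => k * f w).
Proof.
move=> Hf.
suff -> : EFin \o (fun w => k * f w) = (fun w => k%:E * (EFin \o f) w)%E by exact: integrableZl.
by apply: funext => w /=; rewrite EFinM.
Qed.

Lemma E_cst0 : E (fun _ : T => (0:R)) = 0.
Proof. by rewrite Rintegral_cst // mul0r. Qed.

Lemma Int_sum (I : Type) (s : seq I) (f : I -> T -> R) : (forall i, Int (f i)) ->
  Int (fun w => \sum_(i <- s) f i w) /\ E (fun w => \sum_(i <- s) f i w) = \sum_(i <- s) E (f i).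
Proof.
move=> Hf; elim: s => [|a s [IH1 IH2]].
  rewrite big_nil (_ : (fun w => \sum_(i <- [::]) f i w) = fun _ => 0).
    by split; [exact: Int_cst | exact: E_cst0].
  by apply: funext => w; rewrite big_nil.
rewrite big_cons (_ : (fun w => \sum_(i <- a :: s) f i w) = fun w => f a w + \sum_(i <- s) f i w).
  split; first exact: IntD.
  by rewrite RintegralD // IH2.
by apply: funext => w; rewrite big_cons.
Qed.

Lemma absE (x : R) : `|x%:E|%E = (`|x|)%:E.
Proof. by []. Qed.

Lemma L2M (f g : T -> R) : L2 f -> L2 g -> Int (fun w => f w * g w).
Proof.
move=> [mf If] [mg Ig].
apply: (le_integrable measurableT _ _ (IntD If Ig)).
  by apply/measurable_realfun.measurable_EFinP; exact: measurable_realfun.measurable_funM.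
move=> w _ /=; rewrite lee_fin.
rewrite (ger0_norm (addr_ge0 (sqr_ge0 _) (sqr_ge0 _))) normrM.
rewrite -(real_normK (num_real (f w))) -(real_normK (num_real (g w))).
have := sqr_ge0 (`|f w| - `|g w|); have := normr_ge0 (f w); have := normr_ge0 (g w).
nra.
Qed.

Lemma L2D (f g : T -> R) : L2 f -> L2 g -> L2 (fun w => f w + g w).
Proof.
move=> [mf If] [mg Ig]; split; first exact: measurable_realfun.measurable_funD.
apply: (le_integrable measurableT _ _ (IntZ 2 (IntD If Ig))).
  by apply/measurable_realfun.measurable_EFinP; apply: measurable_realfun.measurable_funX; exact: measurable_realfun.measurable_funD.
move=> w _ /=; rewrite lee_fin.
rewrite ger0_norm ?sqr_ge0 // ger0_norm; last by rewrite mulr_ge0 // addr_ge0 ?sqr_ge0.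
have := sqr_ge0 (f w - g w); nra.
Qed.

Lemma L2Z (k : R) (f : T -> R) : L2 f -> L2 (fun w => k * f w).
Proof.
move=> [mf If]; split; first exact: measurable_realfun.measurable_funM.
rewrite (_ : (fun w => (k * f w) ^+ 2) = fun w => k ^+ 2 * f w ^+ 2); first exact: IntZ.
by apply: funext => w; rewrite exprMn.
Qed.

Lemma L2_cst (k : R) : L2 (fun _ => k).
Proof. by split; [exact: measurable_cst | exact: Int_cst]. Qed.

Lemma L2_sum (I : Type) (s : seq I) (f : I -> T -> R) : (forall i, L2 (f i)) ->
  L2 (fun w => \sum_(i <- s) f i w).
Proof.
move=> Hf; elim: s => [|a s IH].
  rewrite (_ : (fun w => \sum_(i <- [::]) f i w) = fun _ => 0); first exact: L2_cst.
  by apply: funext => w; rewrite big_nil.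
rewrite (_ : (fun w => \sum_(i <- a :: s) f i w) = fun w => f a w + \sum_(i <- s) f i w).
  exact: L2D.
by apply: funext => w; rewrite big_cons.
Qed.


Lemma qf_sum d (M : 'M[R]_d) x : qf M x = \sum_k \sum_j (x j 0 * x k 0) * M j k.
Proof.
rewrite /qf mxE; apply: eq_bigr => k _; rewrite mxE mulr_suml.
by apply: eq_bigr => j _; rewrite !mxE; ring.
Qed.

Lemma mexpect_qf d (Y : T -> 'M[R]_d) x : (forall j k, Int (fun w => Y w j k)) ->
  Int (fun w => qf (Y w) x) /\ qf (mexpect P Y) x = E (fun w => qf (Y w) x).
Proof.
move=> HY.
have eqf : (fun w => qf (Y w) x) = fun w => \sum_k \sum_j (x j 0 * x k 0) * Y w j k.
  by apply: funext => w; rewrite qf_sum.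
rewrite eqf qf_sum.
have Hin k := @Int_sum _ (index_enum 'I_d) (fun j w => (x j 0 * x k 0) * Y w j k)
   (fun j => IntZ (x j 0 * x k 0) (HY j k)).
have [I1 E1] := @Int_sum _ (index_enum 'I_d) (fun k w => \sum_j (x j 0 * x k 0) * Y w j k)
   (fun k => (Hin k).1).
split => //; rewrite E1; apply: eq_bigr => k _; rewrite (Hin k).2.
by apply: eq_bigr => j _; rewrite RintegralZl // mxE.
Qed.

Lemma mexpect_sym d (Y : T -> 'M[R]_d) : (forall w, trmx (Y w) = Y w) ->
  trmx (mexpect P Y) = mexpect P Y.
Proof.
move=> HY; apply/matrixP => i j; rewrite !mxE.
by congr Rintegral; apply: funext => w; rewrite -{1}(HY w) mxE.
Qed.

Lemma L2_mull m n p (A : 'M[R]_(m,n)) (U : T -> 'M[R]_(n,p)) :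
  (forall a b, L2 (fun w => U w a b)) -> forall j k, L2 (fun w => (A *m U w) j k).
Proof.
move=> HU j k.
rewrite (_ : (fun w => (A *m U w) j k) = fun w => \sum_a A j a * U w a k).
  by apply: L2_sum => a; exact: L2Z.
by apply: funext => w; rewrite mxE.
Qed.

Lemma L2_mulr m n p (U : T -> 'M[R]_(m,n)) (A : 'M[R]_(n,p)) :
  (forall a b, L2 (fun w => U w a b)) -> forall j k, L2 (fun w => (U w *m A) j k).
Proof.
move=> HU j k.
rewrite (_ : (fun w => (U w *m A) j k) = fun w => \sum_a A a k * U w j a).
  by apply: L2_sum => a; exact: L2Z.
by apply: funext => w; rewrite mxE; apply: eq_bigr => a _; rewrite mulrC.
Qed.

Lemma Int_mul3 m n p q (U : T -> 'M[R]_(m,n)) (G : 'M[R]_(n,p)) (V : T -> 'M[R]_(p,q)) :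
  (forall a b, L2 (fun w => U w a b)) -> (forall a b, L2 (fun w => V w a b)) ->
  forall j k, Int (fun w => (U w *m G *m V w) j k).
Proof.
move=> HU HV j k.
rewrite (_ : (fun w => (U w *m G *m V w) j k) = fun w => \sum_c (U w *m G) j c * V w c k).
  apply: (@Int_sum _ _ (fun c w => (U w *m G) j c * V w c k) _).1 => c.
  by apply: L2M; [exact: L2_mulr | exact: HV].
by apply: funext => w; rewrite mxE.
Qed.

End Meas.
Section Lam.
Variable R : realType.
Variable dT : measure_display.
Variable T : measurableType dT.
Variable P : probability T R.
Variable d : nat.
Hypothesis d0 : (0 < d)%N.
Variables (S : T -> 'M[R]_d) (B L : 'M[R]_d).
Hypothesis Sm : forall j k, measurable_fun setT (fun w => S w j k).
Hypothesis Si : forall j k, P.-integrable setT (fun w => ((S w j k) ^+ 2)%:E).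
Hypothesis Ss : forall w, trmx (S w) = S w.
Hypothesis Bs : trmx B = B.
Hypothesis Ls : trmx L = L.
Hypothesis Lp : forall x, 0 <= qf L x.

Local Notation Int f := (P.-integrable setT (EFin \o f)).
Local Notation E f := (Rintegral P setT f).

Definition Mi (D : 'M[R]_d) := mexpect P (fun w =>
  B *m (S w - 1%:M) *m D *m L *m D *m (S w - 1%:M) *m B).

Lemma LF a b : L2 P (fun w => (S w - 1%:M) a b).
Proof.
rewrite (_ : (fun w => (S w - 1%:M) a b) = fun w => S w a b + (- (1%:M : 'M[R]_d) a b)).
  by apply: L2D; [split; [exact: Sm | exact: Si] | exact: L2_cst].
by apply: funext => w; rewrite !mxE.
Qed.

Lemma Fs w : trmx (S w - 1%:M) = S w - 1%:M.
Proof. by rewrite linearB /= Ss trmx1. Qed.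

Lemma Mi_props D : trmx D = D -> trmx (Mi D) = Mi D /\
  forall x, Int (fun w => qf (D *m L *m D) ((S w - 1%:M) *m B *m x)) /\
    qf (Mi D) x = E (fun w => qf (D *m L *m D) ((S w - 1%:M) *m B *m x)).
Proof.
move=> Ds.
have Yeq w : B *m (S w - 1%:M) *m D *m L *m D *m (S w - 1%:M) *m B =
   (B *m (S w - 1%:M)) *m (D *m L *m D) *m ((S w - 1%:M) *m B).
  by rewrite !mulmxA.
have HY j k : Int (fun w => (B *m (S w - 1%:M) *m D *m L *m D *m (S w - 1%:M) *m B) j k).
  under eq_fun do rewrite Yeq.
  apply: Int_mul3 => a b.
    by apply: L2_mull => a' b'; exact: LF.
  by apply: L2_mulr => a' b'; exact: LF.
split.
  apply: mexpect_sym => w; rewrite Yeq !trmx_mul Fs Bs Ds Ls.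
  by rewrite !mulmxA.
move=> x; have [H1 H2] := mexpect_qf x HY.
have Q w : qf (B *m (S w - 1%:M) *m D *m L *m D *m (S w - 1%:M) *m B) x =
   qf (D *m L *m D) ((S w - 1%:M) *m B *m x).
  by rewrite /qf Yeq !trmx_mul Fs Bs !mulmxA.
rewrite /Mi H2; split.
  by under eq_fun do rewrite -Q.
by congr Rintegral; apply: funext => w; rewrite Q.
Qed.

Lemma Mi_conv D1 D2 t : trmx D1 = D1 -> trmx D2 = D2 -> 0 <= t <= 1 ->
  lambda_max (Mi (t *: D1 + (1 - t) *: D2)) <=
  t * lambda_max (Mi D1) + (1 - t) * lambda_max (Mi D2).
Proof.
move=> D1s D2s /andP[t0 t1].
have Dts : trmx (t *: D1 + (1 - t) *: D2) = t *: D1 + (1 - t) *: D2.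
  by rewrite linearD /= !linearZ /= D1s D2s.
have [St Ht] := Mi_props Dts.
have [S1 H1] := Mi_props D1s.
have [S2 H2] := Mi_props D2s.
have [_ Hle] := lam_props d0 St.
apply: Hle => x.
have [It Et] := Ht x; have [I1 E1] := H1 x; have [I2 E2] := H2 x.
have s0 : 0 <= 1 - t by rewrite subr_ge0.
apply: (@le_trans _ _ (t * qf (Mi D1) x + (1 - t) * qf (Mi D2) x)).
  rewrite Et E1 E2 -!RintegralZl // -RintegralD //; last 2 first.
  - exact: IntZ.
  - exact: IntZ.
  apply: le_Rintegral => //.
    by apply: IntD; exact: IntZ.
  move=> w _; apply: conv_ineq => //.
  by rewrite t0 t1.
have [L1 _] := lam_props d0 S1; have [L2 _] := lam_props d0 S2.
move: (L1 x) (L2 x); move: (qf (Mi D1) x) (qf (Mi D2) x) => q1 q2.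
move: (lambda_max (Mi D1)) (lambda_max (Mi D2)) (nrm2 x) => l1 l2 n h1 h2.
rewrite [X in _ <= X]mulrDl -!mulrA; apply: lerD; exact: ler_wpM2l.
Qed.

Lemma Mi_ge0 D : trmx D = D -> 0 <= lambda_max (Mi D).
Proof.
move=> Ds; have [Sy H] := Mi_props Ds.
have [L1 _] := lam_props d0 Sy.
pose x := (delta_mx (Ordinal d0) 0 : 'cV[R]_d).
have xn0 : x != 0.
  apply/negP => /eqP /matrixP /(_ (Ordinal d0) 0); rewrite !mxE !eqxx /=.
  by move/eqP; rewrite oner_eq0.
have := L1 x; have [_ ->] := H x.
move=> Hx; have : 0 <= lambda_max (Mi D) * nrm2 x.
  apply: le_trans Hx; apply: Rintegral_ge0 => w _.
  by rewrite qf_XLX // Lp.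
by rewrite pmulr_lge0 // nrm2_gt0.
Qed.

End Lam.

Section Final.
Variable R : realType.

Lemma psd_of_pd d (A : 'M[R]_d) : (forall x, x != 0 -> 0 < qf A x) -> forall x, 0 <= qf A x.
Proof.
move=> H x; have [->|xn0] := eqVneq x 0; last exact/ltW/H.
by rewrite /qf mulmx0 mxE.
Qed.

Lemma det_gt0 d (A : 'M[R]_d) : trmx A = A -> (forall x, x != 0 -> 0 < qf A x) -> 0 < \det A.
Proof.
move=> As Ap; have [r [c [rp _ dA _ _]]] := mink_decomp As Ap As (psd_of_pd Ap).
by rewrite dA prodr_gt0.
Qed.

Lemma det_concave d (A B : 'M[R]_d) (t : R) : (0 < d)%N ->
  trmx A = A -> (forall x, x != 0 -> 0 < qf A x) ->
  trmx B = B -> (forall x, x != 0 -> 0 < qf B x) -> 0 < t -> t <= 1 ->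
  t * powR (\det A) d%:R^-1 + (1 - t) * powR (\det B) d%:R^-1
  <= powR (\det (t *: A + (1 - t) *: B)) d%:R^-1.
Proof.
move=> d0 As Ap Bs Bp t0 t1.
have [r [c [rp cp dA dB dT]]] := mink_decomp As Ap Bs (psd_of_pd Bp).
rewrite dB dT; apply: mink_real => //.
- exact: det_gt0.
- by rewrite subr_ge0.
Qed.

Lemma sqrtmx_sym d (A : 'M[R]_d) : trmx (sqrtmx A) = sqrtmx A.
Proof.
rewrite /sqrtmx; case: pselect => [e|_]; last by rewrite trmx0.
by case: (cid e) => /= B [[Bs _] _].
Qed.

End Final.

Theorem proposition3 (R : realType) (dT : measure_display) (T : measurableType dT)
  (P : probability T R) (d n K : nat) (eps Dinf c : R)
  (L : 'M[R]_d) (Ls : 'I_n -> 'M[R]_d) (S : 'I_n -> T -> 'M[R]_d) :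
  (0 < d)%N -> (1 <= n)%N -> (1 <= K)%N -> 0 < eps -> 0 <= c ->
  pdmx L -> (forall i, pdmx (Ls i)) ->
  (forall i w, psdmx (S i w)) ->
  (forall i j k, measurable_fun setT (fun w => S i w j k)) ->
  (forall i j k, P.-integrable setT (fun w => ((S i w j k) ^+ 2)%:E)) ->
  (forall i, mexpect P (S i) = 1%:M) ->
  convex_mxset (feasible P K eps Dinf c L Ls S).
Proof.
move=> d0 n1 K1 eps0 c0 [Lsym Lpd] Lspd Spsd Smeas Sint Sexp.
move=> D1 D2 t F1 F2 /andP[t0 t1].
have [->|tn0] := eqVneq t 0; first by rewrite scale0r add0r subr0 scale1r.
have [->|tn1] := eqVneq t 1; first by rewrite scale1r subrr scale0r addr0.
have tp : 0 < t by rewrite lt_def tn0 t0.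
have s0 : 0 <= 1 - t by rewrite subr_ge0.
have sp : 0 < 1 - t by rewrite subr_gt0 lt_def eq_sym tn1 t1.
case: F1 => [[D1s D1p] [_ lo1] la1 de1 k1].
case: F2 => [[D2s D2p] [_ lo2] la2 de2 k2].
have Lp : forall x, 0 <= qf L x by exact: psd_of_pd.
set Dt := t *: D1 + (1 - t) *: D2.
have Dts : trmx Dt = Dt by rewrite /Dt linearD /= !linearZ /= D1s D2s.
have Dtp : forall x, x != 0 -> 0 < qf Dt x.
  move=> x xn0; rewrite /Dt qf_lin.
  by apply: ltr_pwDl; [apply: mulr_gt0 => //; exact: D1p | apply: mulr_ge0 => //; apply/ltW/D2p].
pose lam i D := lambda_max (Mi P (S i) (sqrtmx (Ls i)) L D).
have lamE D : lambdaD P L Ls S D = sup [set lam i D | i in [set: 'I_n]] by [].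
have Hyp i := (Smeas i, Sint i, fun w => (Spsd i w).1).
have lam_ub D i : lam i D <= lambdaD P L Ls S D.
  rewrite lamE; apply: ub_le_sup; last by exists i.
  exists (\sum_j `|lam j D|) => _ [j _ <-].
  apply: le_trans (real_ler_norm _) _; first exact: num_real.
  by rewrite (bigD1 j) //= lerDl sumr_ge0.
have lam_conv : lambdaD P L Ls S Dt <= t * lambdaD P L Ls S D1 + (1 - t) * lambdaD P L Ls S D2.
  rewrite lamE; apply: ge_sup; first by exists (lam (Ordinal n1) Dt); exists (Ordinal n1).
  move=> _ [i _ <-].
  apply: le_trans (Mi_conv d0 (Smeas i) (Sint i) (fun w => (Spsd i w).1) (sqrtmx_sym _) Lsym Lp D1s D2s _) _.
    by rewrite t0 t1.
  by apply: lerD; apply: ler_wpM2l => //; exact: lam_ub.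
have lam_ge0 : 0 <= lambdaD P L Ls S Dt.
  apply: le_trans (lam_ub Dt (Ordinal n1)).
  exact: (Mi_ge0 d0 (Smeas _) (Sint _) (fun w => (Spsd _ w).1) (sqrtmx_sym _) Lsym Lp Dts).
have g1p : 0 < powR (\det D1) d%:R^-1 by apply: powR_gt0; exact: det_gt0.
have g2p : 0 < powR (\det D2) d%:R^-1 by apply: powR_gt0; exact: det_gt0.
have gtp : 0 < powR (\det Dt) d%:R^-1 by apply: powR_gt0; exact: det_gt0.
have gconc := det_concave d0 D1s D1p D2s D2p tp t1.
rewrite -/Dt in gconc.
rewrite /feasible /loewner_le /psdmx /pdmx.
move: lam_conv lam_ge0 gconc g1p g2p gtp la1 la2 de1 de2 k1 k2.
move: (lambdaD P L Ls S Dt) (lambdaD P L Ls S D1) (lambdaD P L Ls S D2) => lt l1 l2.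
move: (powR (\det Dt) d%:R^-1) (powR (\det D1) d%:R^-1) (powR (\det D2) d%:R^-1) => gt g1 g2.
move=> lc lt0 gc g1p g2p gtp la1 la2 de1 de2 k1 k2.
split => //.
- split.
    by rewrite /symmx linearB /= !trmx_mul Dts Lsym !mulmxA.
  move=> x; change (0 <= qf (Dt - Dt *m L *m Dt) x); rewrite qf_sub qf_lin.
  have := conv_ineq x Lsym Lp D1s D2s (introT andP (conj t0 t1)); rewrite -/Dt => h.
  have h1 : 0 <= qf D1 x - qf (D1 *m L *m D1) x by rewrite -qf_sub; exact: lo1.
  have h2 : 0 <= qf D2 x - qf (D2 *m L *m D2) x by rewrite -qf_sub; exact: lo2.
  have := mulr_ge0 t0 h1; have := mulr_ge0 s0 h2.
  move: h; move: (qf _ x) (qf D1 x) (qf D2 x) (qf (D1 *m L *m D1) x) (qf (D2 *m L *m D2) x).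
  move=> a b e f g h H1 H2; nra.
- apply: le_trans lc _.
  have := lerD (ler_wpM2l t0 la1) (ler_wpM2l s0 la2).
  by rewrite -mulrDl subrKC mul1r.
- have N0 : 0 <= n%:R * eps ^+ 2 by rewrite mulr_ge0 // exprn_ge0 // ltW.
  move: N0; move: (n%:R * eps ^+ 2) de1 de2 => N de1 de2 N0.
  have [hD|hD] := leP 0 Dinf.
    have e1 := ler_wpM2l t0 de1; have e2 := ler_wpM2l s0 de2.
    have e3 := ler_wpM2l N0 gc.
    have e4 : 0 <= 4 * Dinf by rewrite mulr_ge0.
    have e5 := ler_wpM2l e4 lc.
    apply: le_trans e5 _; apply: le_trans _ e3.
    move: e1 e2; rewrite !mulrA => e1 e2.
    nra.
  apply: (@le_trans _ _ 0).
    by rewrite -mulrA pmulr_rle0 // nmulr_rle0.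
  by apply: mulr_ge0 => //; apply: ltW.
- have e2p : 0 < eps ^+ 2 by rewrite exprn_gt0.
  rewrite ler_pdivrMr ?mulr_gt0 //.
  rewrite ler_pdivrMr ?mulr_gt0 // in k1.
  rewrite ler_pdivrMr ?mulr_gt0 // in k2.
  have K0 : 0 <= K%:R * eps ^+ 2 :> R by rewrite mulr_ge0 // ltW.
  have e3 := ler_wpM2l K0 gc.
  have e1 := ler_wpM2l t0 k1; have e2 := ler_wpM2l s0 k2.
  move: e1 e2 e3; move: (12 * c) (K%:R : R) (eps ^+ 2) => C0 KK ee.
  nra.
Qed.
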